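(* Let $X$ be a random variable taking values in a set $\mathcal{X}$, let $Y \in [0,1]$ be a target outcome and let $\hat{Y} \in [0,1]$ be an expert prediction, all jointly distributed. Let $\mathcal{F}$ be a class of functions $\mathcal{X} \to [0,1]$, let $\alpha \ge 0$, and let $S_1, \dots, S_K \subseteq \mathcal{X}$ ($K \ge 1$) be an $\alpha$-multicalibrated partition with respect to $\mathcal{F}$ and $Y$. Let the random variable $J(X) \in [K]$ be defined by $J(X) = k$ iff $X \in S_k$. Define $\gamma^*, \beta^* \in \mathbb{R}^K$ by $$\gamma^*, \beta^* \in \arg\min_{\gamma \in \mathbb{R}^K, \beta \in \mathbb{R}^K} \mathbb{E}\left[\left(Y - \gamma_{J(X)} - \beta_{J(X)} \hat{Y}\right)^2\right].$$ Then for every $f \in \mathcal{F}$ and every $k \in [K]$, $$\mathbb{E}_k\left[\left(Y - \gamma^*_k - \beta^*_k \hat{Y}\right)^2\right] + 4\,\mathrm{Cov}_k(Y, \hat{Y})^2 \le \mathbb{E}_k\left[(Y - f(X))^2\right] + 2\alpha.$$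
   Context: For a subset $S \subseteq \mathcal{X}$ (with $\mathbb{P}(X \in S) > 0$), $\mathbb{E}_S, \mathrm{Var}_S, \mathrm{Cov}_S$ denote expectation, variance and covariance conditional on the event $\{X \in S\}$; $\mathbb{E}_k, \mathrm{Var}_k, \mathrm{Cov}_k$ denote these conditional on $\{X \in S_k\}$. A set $S \subseteq \mathcal{X}$ is $\alpha$-indistinguishable with respect to a function class $\mathcal{F}$ and target $Y$ if $|\mathrm{Cov}(f(X), Y \mid X \in S)| \le \alpha$ for all $f \in \mathcal{F}$. Sets $S_1, \dots, S_K$ form an $\alpha$-multicalibrated partition with respect to $\mathcal{F}$ and $Y$ if they partition $\mathcal{X}$ and each $S_k$ is $\alpha$-indistinguishable with respect to $\mathcal{F}$ and $Y$. *)

(* Defs.v *)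
From HB Require Import structures.
From mathcomp Require Import all_boot all_order all_algebra.
From mathcomp Require Import all_classical all_reals all_analysis.
Set Implicit Arguments. Unset Strict Implicit. Unset Printing Implicit Defensive.
Import Order.TTheory GRing.Theory Num.Theory.
Local Open Scope classical_set_scope.
Local Open Scope ring_scope.

Section Defs.
Context (R : realType) (d : measure_display) (T : measurableType d)
        (P : probability T R).

Definition expect (Z : T -> R) : R := Rintegral P setT Z.

(* Conditional expectation given the event A (assumed P A > 0):
   E_A[Z] = E[Z 1_A] / P(A). *)
Definition condE (A : set T) (Z : T -> R) : R :=
  Rintegral P A Z / fine (P A).

Definition condCov (A : set T) (U V : T -> R) : R :=
  condE A (fun w => (U w - condE A U) * (V w - condE A V)).

Context (d' : measure_display) (Xs : measurableType d') (X : T -> Xs).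

Definition indistinguishable (F : set (Xs -> R)) (Y : T -> R) (alpha : R)
  (S : set Xs) : Prop :=
  forall f, F f -> `| condCov (X @^-1` S) (fun w => f (X w)) Y | <= alpha.

Definition multicalibrated_partition (F : set (Xs -> R)) (Y : T -> R)
  (alpha : R) (K : nat) (S : 'I_K -> set Xs) : Prop :=
  [/\ (forall k, measurable (S k)),
      (forall i j, i != j -> S i `&` S j = set0),
      (\bigcup_(k in setT) S k = setT) &
      (forall k, indistinguishable F Y alpha (S k))].
End Defs.

Definition sqloss (R : realType) (d : measure_display) (T : measurableType d)
  (P : probability T R) (K : nat) (Y Yh : T -> R) (J : T -> 'I_K)
  (g b : 'I_K -> R) : R :=
  expect P (fun w => (Y w - g (J w) - b (J w) * Yh w) ^+ 2).

(* Main.v *)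
Require Import Defs.
From HB Require Import structures.
From mathcomp Require Import all_boot all_order all_algebra.
From mathcomp Require Import all_classical all_reals all_analysis.
Import Order.TTheory GRing.Theory Num.Theory.
Import numFieldNormedType.Exports.
Local Open Scope classical_set_scope.
Local Open Scope ring_scope.
From mathcomp Require Import ring lra.
Set Implicit Arguments. Unset Strict Implicit.

Section H.
Context (R : realType) (d : measure_display) (T : measurableType d)
        (P : probability T R).

Definition good (f : T -> R) := measurable_fun setT f /\ exists M, forall w, `|f w| <= M.

Lemma good_int D f : measurable D -> good f -> P.-integrable D (EFin \o f).
Proof.
move=> mD [mf [M hM]]; apply: measurable_bounded_integrable => //.
- by rewrite (le_lt_trans (probability_le1 P mD)) // ltry.
- exact: measurable_funS mf.
- rewrite /bounded_near; near=> N => t _ /=.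
  by rewrite (le_trans (hM t)) //; near: N; exact: nbhs_pinfty_ge.
Unshelve. all: end_near.
Qed.

Lemma good_cst c : good (fun=> c).
Proof. by split; [exact: measurable_cst| exists `|c|]. Qed.

Lemma good_add f g : good f -> good g -> good (fun w => f w + g w).
Proof.
move=> [mf [M hM]] [mg [N hN]]; split; first exact: measurable_realfun.measurable_funD.
by exists (M + N) => w; rewrite (le_trans (ler_normD _ _)) // lerD.
Qed.

Lemma good_opp f : good f -> good (fun w => - f w).
Proof.
move=> [mf [M hM]]; split; first exact: measurable_realfun.measurable_funN.
by exists M => w; rewrite normrN.
Qed.

Lemma good_mul f g : good f -> good g -> good (fun w => f w * g w).
Proof.
move=> [mf [M hM]] [mg [N hN]]; split; first exact: measurable_realfun.measurable_funM.
exists (`|M| * `|N|) => w; rewrite normrM ler_pM //.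
  by rewrite (le_trans (hM w)) // ler_norm.
by rewrite (le_trans (hN w)) // ler_norm.
Qed.

Lemma good_exp2 f : good f -> good (fun w => f w ^+ 2).
Proof. by move=> gf; rewrite /GRing.exp /=; apply: good_mul. Qed.


Section I.
Context (A : set T) (mA : measurable A).
Local Notation I := (Rintegral P A).

Lemma IB f g : good f -> good g -> I (fun w => f w + g w) = I f + I g.
Proof. by move=> gf gg; rewrite RintegralD //; apply: good_int. Qed.

Lemma IZ c f : good f -> I (fun w => c * f w) = c * I f.
Proof. by move=> gf; rewrite RintegralZl //; apply: good_int. Qed.

Lemma Ic c : I (fun=> c) = c * fine (P A).
Proof. by rewrite Rintegral_cst. Qed.

Lemma Ile f g : good f -> good g -> (forall w, f w <= g w) -> I f <= I g.
Proof. by move=> gf gg fg; apply: le_Rintegral => //; apply: good_int. Qed.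

End I.

Lemma good_comp_idx (K : nat) (A : 'I_K -> set T) (J : T -> 'I_K) (c : 'I_K -> R) :
  (forall i, measurable (A i)) -> (forall w i, J w = i <-> A i w) ->
  good (fun w => c (J w)).
Proof.
move=> mA hJ.
have -> : (fun w => c (J w)) = (fun w => \sum_(i < K) c i * (\1_(A i) w : R)).
  apply/funext => w; rewrite (bigD1 (J w)) //= big1 ?addr0.
    by rewrite indicE mem_set ?mulr1 //; apply/hJ.
  move=> i /negbTE ni; rewrite indicE memNset ?mulr0 //.
  by move/hJ => ei; rewrite ei eqxx in ni.
split.
  apply: measurable_sum => i; apply: measurable_realfun.measurable_funM.
    exact: measurable_cst.
  exact: measurable_realfun.measurable_indic.
exists (\sum_(i < K) `|c i|) => w.
rewrite (le_trans (ler_norm_sum _ _ _)) // ler_sum // => i _.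
rewrite normrM indicE; case: (w \in A i) => /=.
  by rewrite normr1 mulr1.
by rewrite normr0 mulr0.
Qed.

End H.

Theorem theorem1 (R : realType) (d : measure_display) (T : measurableType d)
  (P : probability T R) (d' : measure_display) (Xs : measurableType d')
  (X : T -> Xs) (Y Yh : T -> R) (F : set (Xs -> R)) (alpha : R) (K : nat)
  (S : 'I_K -> set Xs) (J : T -> 'I_K) (gs bs : 'I_K -> R) :
  measurable_fun setT X -> measurable_fun setT Y -> measurable_fun setT Yh ->
  (forall w, 0 <= Y w <= 1) -> (forall w, 0 <= Yh w <= 1) ->
  (forall f, F f -> measurable_fun setT f /\ (forall x, 0 <= f x <= 1)) ->
  0 <= alpha -> (0 < K)%N ->
  multicalibrated_partition P X F Y alpha S ->
  (forall k, (0 < P (X @^-1` S k))%E) ->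
  (forall w k, J w = k <-> S k (X w)) ->
  (forall g b : 'I_K -> R, sqloss P Y Yh J gs bs <= sqloss P Y Yh J g b) ->
  forall f k, F f ->
    condE P (X @^-1` S k) (fun w => (Y w - gs k - bs k * Yh w) ^+ 2)
      + 4 * (condCov P (X @^-1` S k) Y Yh) ^+ 2
    <= condE P (X @^-1` S k) (fun w => (Y w - f (X w)) ^+ 2) + 2 * alpha.
Proof.
move=> mX hmY hmYh Y01 Yh01 hF a0 K0 [mS disj cov ind] Ppos hJ opt f k Ff.
have mAi : forall i, measurable (X @^-1` S i).
  by move=> i; rewrite -[X @^-1` _]setTI; apply: mX.
set A := X @^-1` S k.
have mA : measurable A by exact: mAi.
set p := fine (P A).
have hp : 0 < p.
  by rewrite fine_gt0 // Ppos /= (le_lt_trans (probability_le1 P mA)) // ltry.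
have gY : good Y.
  split => //; exists 1 => w; have /andP[h0 h1] := Y01 w; by rewrite ger0_norm.
have gYh : good Yh.
  split => //; exists 1 => w; have /andP[h0 h1] := Yh01 w; by rewrite ger0_norm.
have [hmf f01] := hF f Ff.
have gf : good (fun w => f (X w)).
  split; first exact: (measurableT_comp hmf mX).
  by exists 1 => w; have /andP[h0 h1] := f01 (X w); rewrite ger0_norm.
have gfX := gf.
pose I := Rintegral P A.
have Idef : forall Z, condE P A Z = I Z / p by [].
Ltac gd := repeat first [ assumption | apply: good_exp2 | apply: good_add | apply: good_opp | apply: good_mul | apply: good_cst ].
set mY := condE P A Y. set mH := condE P A Yh. set mf := condE P A (fun w => f (X w)).
have pn0 : p != 0 by rewrite gt_eqF.
have Iu : I (fun w => Y w - mY) = 0.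
  rewrite /I IB //; try gd. rewrite Ic // -/p -/(I Y) /mY Idef. by rewrite mulNr divfK // subrr.
have Iv : I (fun w => Yh w - mH) = 0.
  rewrite /I IB //; try gd. rewrite Ic // -/p -/(I Yh) /mH Idef. by rewrite mulNr divfK // subrr.
pose C := condCov P A Y Yh.
have CE : C * p = I (fun w => (Y w - mY) * (Yh w - mH)) by rewrite /C /condCov Idef divfK.
pose be := 4 * C.
have F3 : I (fun w => ((Y w - mY) - be * (Yh w - mH))^+2) =
   I (fun w => (Y w - mY)^+2) + (-2*be) * I (fun w => (Y w - mY)*(Yh w - mH))
   + be^+2 * I (fun w => (Yh w - mH)^+2).
  transitivity (I (fun w => (Y w - mY)^+2 + ((-2*be) * ((Y w - mY)*(Yh w - mH)) + be^+2 * (Yh w - mH)^+2))).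
    by apply: eq_Rintegral => w _; ring.
  rewrite /I IB //; try gd. rewrite IB //; try gd. rewrite IZ //; try gd. rewrite IZ //; try gd.
  by rewrite addrA.
have F4 : I (fun w => (Yh w - mH)^+2) <= p / 4.
  apply: (@le_trans _ _ (I (fun w => 4^-1 + (- 2 * (mH - 2^-1)) * (Yh w - mH)))).
    apply: Ile => //; try gd. move=> w; have /andP[h0 h1] := Yh01 w.
    have e : (Yh w - mH)^+2 = (Yh w - 2^-1)^+2 - 2 * (mH - 2^-1) * (Yh w - mH) - (mH - 2^-1)^+2.
      by field.
    rewrite e; have : (Yh w - 2^-1)^+2 <= 4^-1.
      have e2 : (4^-1 : R) - (Yh w - 2^-1)^+2 = Yh w * (1 - Yh w) by field.
      by rewrite -subr_ge0 e2 mulr_ge0 // subr_ge0.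
    have := sqr_ge0 (mH - 2^-1). lra.
  rewrite /I IB //; try gd. rewrite IZ //; try gd. rewrite Ic //; rewrite /I in Iv; rewrite Iv.
  by rewrite mulr0 addr0 mulrC.
have F5 : I (fun w => (Y w - mY)^+2) + (-2) * I (fun w => (f (X w) - mf) * (Y w - mY))
          <= I (fun w => (Y w - f (X w))^+2).
  apply: (@le_trans _ _ (I (fun w => (Y w - mY)^+2 + (-2) * ((f (X w) - mf) * (Y w - mY)) + (-2 * (mf - mY)) * (Y w - mY)))).
    rewrite /I IB //; try gd. rewrite IB //; try gd. rewrite IZ //; try gd. rewrite IZ //; try gd. rewrite /I in Iu. by rewrite Iu mulr0 addr0.
  apply: Ile => //; try gd. move=> w.
  have e : (Y w - f (X w))^+2 = (Y w - mY)^+2 + (-2) * ((f (X w) - mf) * (Y w - mY)) + (-2 * (mf - mY)) * (Y w - mY) + (f (X w) - mY)^+2 by ring.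
  by rewrite e lerDl sqr_ge0.
have F6 : I (fun w => (f (X w) - mf) * (Y w - mY)) <= alpha * p.
  have := ind k f Ff; rewrite /condCov -/A Idef -/mY -/mf => h.
  rewrite -ler_pdivrMr //; exact: le_trans (ler_norm _) h.
have gJ : forall c : 'I_K -> R, good (fun w => c (J w)).
  by move=> c; apply: (good_comp_idx c mAi) => w i; exact: hJ.
have gPhi : forall g b : 'I_K -> R, good (fun w => (Y w - g (J w) - b (J w) * Yh w)^+2).
  move=> g b; apply: good_exp2; apply: good_add; [apply: good_add; [done|apply: good_opp; exact: gJ]|].
  by apply: good_opp; apply: good_mul; [exact: gJ|done].
have hsplit : forall g b : 'I_K -> R, sqloss P Y Yh J g b =
   Rintegral P A (fun w => (Y w - g k - b k * Yh w)^+2)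
   + Rintegral P (~` A) (fun w => (Y w - g (J w) - b (J w) * Yh w)^+2).
  move=> g b; rewrite /sqloss /expect -(setUv A) Rintegral_setU //.
  - congr (_ + _); apply: eq_Rintegral => w /set_mem Aw.
    by have -> : J w = k by apply/hJ.
  - exact: measurableC.
  - by rewrite setUv; apply: good_int => //; exact: gPhi.
  - by apply/disj_setPCl.
pose ga := mY - be * mH.
pose g' := fun i => if i == k then ga else gs i.
pose b' := fun i => if i == k then be else bs i.
have F8 : I (fun w => (Y w - gs k - bs k * Yh w)^+2) <= I (fun w => ((Y w - mY) - be * (Yh w - mH))^+2).
  have := opt g' b'; rewrite !hsplit.
  have -> : Rintegral P (~` A) (fun w => (Y w - g' (J w) - b' (J w) * Yh w)^+2)
          = Rintegral P (~` A) (fun w => (Y w - gs (J w) - bs (J w) * Yh w)^+2).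
    apply: eq_Rintegral => w /set_mem nAw.
    rewrite /g' /b'; have /negbTE -> : J w != k by apply/eqP => /hJ.
    by [].
  rewrite lerD2r /g' /b' eqxx => h; rewrite /I (le_trans h) //.
  by rewrite le_eqVlt; apply/orP; left; apply/eqP; apply: eq_Rintegral => w _; rewrite /ga; ring.
rewrite !Idef -/C.
have hC := ler_wpM2l (sqr_ge0 C) F4.
rewrite F3 -CE /be in F8.
have H1 : I (fun w => (Y w - gs k - bs k * Yh w)^+2) + 4 * C^+2 * p <= I (fun w => (Y w - f (X w))^+2) + 2 * alpha * p.
  move: F8 hC F5 F6.
  move: (I (fun w => (Y w - gs k - bs k * Yh w)^+2)) (I (fun w => (Y w - f (X w))^+2)) (I (fun w => (Y w - mY)^+2))
    (I (fun w => (Yh w - mH)^+2)) (I (fun w => (f (X w) - mf) * (Y w - mY))) => a W U Vv Z.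
  move=> h1 h2 h3 h4. nra.
rewrite -(ler_pM2r hp) !mulrDl !divfK //.
lra.
Qed.
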